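(* Let $R>0$ and $\Theta=(\alpha,\rho_r,\rho_d,\rho_s,\rho_0,T)$ with $\alpha>1$, $\rho_r,\rho_d,\rho_s,\rho_0>0$ and $T>1$ an integer. If $$\rho_r+2\rho_0\ \ge\ \frac{\alpha}{1+\lfloor\sqrt T\rfloor}+\frac{\alpha(1+\lfloor\sqrt T\rfloor)}{\lfloor\sqrt T\rfloor}\Big(2^{\frac{R}{1-\lfloor\sqrt T\rfloor/T}}-1\Big),$$ then every maximizer $(M,K,\tau)$ of $\zeta_{zf}(M,K,\tau,R,\Theta)$ over integers with $1\le K\le\tau<T$, $M>K$ satisfies $M=2$ and $K=1$; i.e. $M^\star_{zf}(R,\Theta)=2$, $K^\star_{zf}(R,\Theta)=1$.
   Context: For $M>K$, $1\le K\le\tau<T$ let $$\gamma_u=\frac{K+\tau}{2\tau(M-K)}\Big(2^{\frac{R}{K(1-\tau/T)}}-1\Big)+\sqrt{\Big(\frac{K+\tau}{2\tau(M-K)}\Big(2^{\frac{R}{K(1-\tau/T)}}-1\Big)\Big)^2+\frac{2^{\frac{R}{K(1-\tau/T)}}-1}{\tau(M-K)}}$$ and define $\zeta_{zf}(M,K,\tau,R,\Theta)>0$ by $$\frac{R}{\zeta_{zf}(M,K,\tau,R,\Theta)}=\alpha K\gamma_u+\rho_s+K\Big(\rho_d+\frac{8K^2\rho_0}{3T}\Big)+M\Big(\rho_r+2K\rho_0+\frac{4K^2\rho_0}{T}\Big).$$ $(M^\star_{zf},K^\star_{zf},\tau^\star)$ denotes the maximizer of $\zeta_{zf}$ over integers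 with $1\le K\le\tau<T$, $M>K$. *)

(* Defs.v *)
From Stdlib Require Import Reals Lra Lia.
Open Scope R_scope.

Definition snr_term (M K tau T : nat) (Rate : R) : R :=
  Rpower 2 (Rate / (INR K * (1 - INR tau / INR T))) - 1.

Definition gamma_u (M K tau T : nat) (Rate : R) : R :=
  let a := (INR K + INR tau) / (2 * INR tau * (INR M - INR K)) * snr_term M K tau T Rate in
  a + sqrt (a ^ 2 + snr_term M K tau T Rate / (INR tau * (INR M - INR K))).

Definition zeta_denom (M K tau : nat) (Rate alpha rho_r rho_d rho_s rho_0 : R) (T : nat) : R :=
  alpha * INR K * gamma_u M K tau T Rate + rho_s
  + INR K * (rho_d + 8 * INR K ^ 2 * rho_0 / (3 * INR T))
  + INR M * (rho_r + 2 * INR K * rho_0 + 4 * INR K ^ 2 * rho_0 / INR T).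

Definition zeta_zf (M K tau : nat) (Rate alpha rho_r rho_d rho_s rho_0 : R) (T : nat) : R :=
  Rate / zeta_denom M K tau Rate alpha rho_r rho_d rho_s rho_0 T.

Definition admissible (M K tau T : nat) : Prop :=
  (1 <= K)%nat /\ (K <= tau)%nat /\ (tau < T)%nat /\ (K < M)%nat.

(* Main.v *)
Require Import Defs.
From Stdlib Require Import Reals Lra Lia.
Open Scope R_scope.

Lemma rpow2_ge1 (x : R) : 0 <= x -> 1 <= Rpower 2 x.
Proof.
  intro Hx. unfold Rpower.
  assert (0 <= x * ln 2).
  { apply Rmult_le_pos; [exact Hx|]. pose proof ln_lt_2; lra. }
  pose proof (exp_ineq1_le (x * ln 2)). lra.
Qed.

Lemma snr_nonneg M K tau T Rate : 0 < Rate -> (1 <= K)%nat -> (tau < T)%nat ->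
  0 <= snr_term M K tau T Rate.
Proof.
  intros HR HK HT. unfold snr_term.
  assert (HT0 : 0 < INR T) by (apply lt_0_INR; lia).
  assert (HtT : INR tau < INR T) by (apply lt_INR; lia).
  assert (HK0 : 1 <= INR K) by (apply (le_INR 1); lia).
  assert (0 < 1 - INR tau / INR T).
  { apply Rlt_Rminus. apply (Rmult_lt_reg_r (INR T)); auto.
    unfold Rdiv; rewrite Rmult_assoc, Rinv_l; lra. }
  assert (0 <= Rate / (INR K * (1 - INR tau / INR T))).
  { apply Rlt_le, Rdiv_lt_0_compat; auto. apply Rmult_lt_0_compat; lra. }
  pose proof (rpow2_ge1 _ H0). lra.
Qed.

Lemma gamma_nonneg M K tau T Rate : 0 < Rate -> admissible M K tau T ->
  0 <= gamma_u M K tau T Rate.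
Proof.
  intros HR [HK [Hkt [HtT HKM]]].
  pose proof (snr_nonneg M K tau T Rate HR HK HtT) as Hc.
  unfold gamma_u.
  assert (HK0 : 1 <= INR K) by (apply (le_INR 1); lia).
  assert (Ht0 : 1 <= INR tau) by (apply (le_INR 1); lia).
  assert (HMK : INR K + 1 <= INR M) by (rewrite <- S_INR; apply le_INR; lia).
  assert (0 <= (INR K + INR tau) / (2 * INR tau * (INR M - INR K)) * snr_term M K tau T Rate).
  { apply Rmult_le_pos; auto. apply Rlt_le, Rdiv_lt_0_compat; [lra|].
    apply Rmult_lt_0_compat; lra. }
  match goal with |- context [sqrt ?x] => pose proof (sqrt_pos x) end.
  lra.
Qed.

Lemma denom_pos M K tau Rate alpha rho_r rho_d rho_s rho_0 T :
  0 < Rate -> 1 < alpha -> 0 < rho_r -> 0 < rho_d -> 0 < rho_s -> 0 < rho_0 ->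
  admissible M K tau T ->
  0 < zeta_denom M K tau Rate alpha rho_r rho_d rho_s rho_0 T.
Proof.
  intros HR Ha Hr Hd Hs H0 Had.
  pose proof (gamma_nonneg M K tau T Rate HR Had) as Hg.
  destruct Had as [HK [Hkt [HtT HKM]]].
  assert (HT0 : 0 < INR T) by (apply lt_0_INR; lia).
  assert (HK0 : 1 <= INR K) by (apply (le_INR 1); lia).
  assert (HM0 : 0 <= INR M) by apply pos_INR.
  unfold zeta_denom.
  assert (0 <= alpha * INR K * gamma_u M K tau T Rate).
  { apply Rmult_le_pos; auto. apply Rmult_le_pos; lra. }
  assert (0 <= 8 * INR K ^ 2 * rho_0 / (3 * INR T)).
  { apply Rmult_le_pos; [|apply Rlt_le, Rinv_0_lt_compat; lra].
    apply Rmult_le_pos; [|lra]. apply Rmult_le_pos; [lra|]. apply pow2_ge_0. }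
  assert (0 <= 4 * INR K ^ 2 * rho_0 / INR T).
  { apply Rmult_le_pos; [|apply Rlt_le, Rinv_0_lt_compat; lra].
    apply Rmult_le_pos; [|lra]. apply Rmult_le_pos; [lra|]. apply pow2_ge_0. }
  assert (0 <= INR K * (rho_d + 8 * INR K ^ 2 * rho_0 / (3 * INR T))) by (apply Rmult_le_pos; lra).
  assert (0 <= INR M * (rho_r + 2 * INR K * rho_0 + 4 * INR K ^ 2 * rho_0 / INR T)).
  { apply Rmult_le_pos; auto. assert (0 <= 2 * INR K * rho_0) by (apply Rmult_le_pos; lra). lra. }
  lra.
Qed.

Theorem theorem2 (Rate alpha rho_r rho_d rho_s rho_0 : R) (T : nat) :
  0 < Rate -> 1 < alpha -> 0 < rho_r -> 0 < rho_d -> 0 < rho_s -> 0 < rho_0 ->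
  (1 < T)%nat ->
  let s := INR (Nat.sqrt T) in
  rho_r + 2 * rho_0 >=
    alpha / (1 + s)
    + alpha * (1 + s) / s * (Rpower 2 (Rate / (1 - s / INR T)) - 1) ->
  forall M K tau : nat,
    admissible M K tau T ->
    (forall M' K' tau' : nat, admissible M' K' tau' T ->
       zeta_zf M' K' tau' Rate alpha rho_r rho_d rho_s rho_0 T
       <= zeta_zf M K tau Rate alpha rho_r rho_d rho_s rho_0 T) ->
    M = 2%nat /\ K = 1%nat.
Proof.
  intros HR Ha Hr Hd Hs H0 HT s Hcond M K tau Had Hmax.
  assert (Hs1 : (1 <= Nat.sqrt T)%nat).
  { pose proof (Nat.sqrt_le_mono 2 T). rewrite Nat.sqrt_2 in H. lia. }
  assert (HsT : (Nat.sqrt T < T)%nat) by (apply Nat.sqrt_lt_lin; lia).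
  assert (Ad0 : admissible 2 1 (Nat.sqrt T) T) by (unfold admissible; lia).
  destruct (Nat.eq_dec M 2) as [HM2|HM2].
  { split; auto. destruct Had as [? [? [? ?]]]. lia. }
  exfalso.
  assert (HM3 : (3 <= M)%nat) by (destruct Had as [? [? [? ?]]]; lia).
  specialize (Hmax _ _ _ Ad0).
  pose proof (denom_pos _ _ _ _ _ _ _ _ _ _ HR Ha Hr Hd Hs H0 Ad0) as HD0.
  pose proof (denom_pos _ _ _ _ _ _ _ _ _ _ HR Ha Hr Hd Hs H0 Had) as HD.
  unfold zeta_zf in Hmax.
  set (D0 := zeta_denom 2 1 (Nat.sqrt T) Rate alpha rho_r rho_d rho_s rho_0 T) in *.
  set (D := zeta_denom M K tau Rate alpha rho_r rho_d rho_s rho_0 T) in *.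
  assert (HDD : D <= D0).
  { unfold Rdiv in Hmax.
    apply Rmult_le_reg_l with (r := Rate) in Hmax; auto.
    apply Rinv_le_contravar in Hmax; [|apply Rinv_0_lt_compat; auto].
    rewrite !Rinv_inv in Hmax. exact Hmax. }
  assert (Hs1r : 1 <= s) by (apply (le_INR 1); exact Hs1).
  assert (HT0 : 0 < INR T) by (apply lt_0_INR; lia).
  set (c := Rpower 2 (Rate / (1 - s / INR T)) - 1) in *.
  assert (Hc0 : 0 <= c).
  { pose proof (snr_nonneg 2 1 (Nat.sqrt T) T Rate HR ltac:(lia) HsT) as Hh.
    unfold snr_term in Hh. change (INR 1) with 1 in Hh. rewrite Rmult_1_l in Hh. exact Hh. }
  assert (Hg0 : gamma_u 2 1 (Nat.sqrt T) T Rate <= 1 / (1 + s) + (1 + s) / s * c).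
  { unfold gamma_u, snr_term. fold s. change (INR 1) with 1. change (INR 2) with 2.
    rewrite Rmult_1_l. fold c.
    replace ((1 + s) / (2 * s * (2 - 1)) * c) with ((1 + s) / (2 * s) * c) by (field; lra).
    replace (c / (s * (2 - 1))) with (c / s) by (field; lra).
    set (b := (1 + s) / (2 * s) * c).
    assert (Hb : (1 + s) / s * c = 2 * b) by (unfold b; field; lra).
    rewrite Hb.
    assert (Hb0 : 0 <= b).
    { unfold b. apply Rmult_le_pos; auto. apply Rlt_le, Rdiv_lt_0_compat; lra. }
    assert (Hi : 0 < 1 / (1 + s)) by (apply Rdiv_lt_0_compat; lra).
    assert (sqrt (b ^ 2 + c / s) <= b + 1 / (1 + s)).
    { rewrite <- (sqrt_pow2 (b + 1 / (1 + s))) by lra.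
      apply sqrt_le_1_alt.
      assert (E : b ^ 2 + c / s + (1 / (1 + s)) ^ 2 = (b + 1 / (1 + s)) ^ 2)
        by (unfold b; field; lra).
      pose proof (pow2_ge_0 (1 / (1 + s))). lra. }
    lra. }
  assert (HaG : alpha * gamma_u 2 1 (Nat.sqrt T) T Rate <= rho_r + 2 * rho_0).
  { assert (alpha * gamma_u 2 1 (Nat.sqrt T) T Rate <= alpha * (1 / (1 + s) + (1 + s) / s * c))
      by (apply Rmult_le_compat_l; lra).
    replace (alpha * (1 / (1 + s) + (1 + s) / s * c))
      with (alpha / (1 + s) + alpha * (1 + s) / s * c) in H by (field; lra).
    lra. }
  pose proof (gamma_nonneg M K tau T Rate HR Had) as Hg.
  destruct Had as [HK [Hkt [HtT HKM]]].
  assert (k1 : 1 <= INR K) by (apply (le_INR 1); lia).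
  assert (m3 : 3 <= INR M) by (apply (le_INR 3) in HM3; simpl in HM3; lra).
  unfold D, D0, zeta_denom in HDD. fold s in HDD.
  change (INR 1) with 1 in HDD. change (INR 2) with 2 in HDD.
  set (k := INR K) in *. set (m := INR M) in *. set (g := gamma_u M K tau T Rate) in *.
  set (g0 := gamma_u 2 1 (Nat.sqrt T) T Rate) in *.
  set (iT := / INR T).
  assert (HiT : 0 < iT) by (apply Rinv_0_lt_compat; lra).
  replace (8 * k ^ 2 * rho_0 / (3 * INR T)) with (8/3 * k ^ 2 * rho_0 * iT) in HDD
    by (unfold iT; field; lra).
  replace (8 * 1 ^ 2 * rho_0 / (3 * INR T)) with (8/3 * rho_0 * iT) in HDD
    by (unfold iT; field; lra).
  replace (4 * k ^ 2 * rho_0 / INR T) with (4 * k ^ 2 * rho_0 * iT) in HDD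
    by (unfold iT; field; lra).
  replace (4 * 1 ^ 2 * rho_0 / INR T) with (4 * rho_0 * iT) in HDD
    by (unfold iT; field; lra).
  assert (k * g >= g) by nra.
  assert (alpha * k * g >= 0) by nra.
  assert (k ^ 3 >= 1) by nra.
  assert (k^2 >= 1) by nra.
  assert (k * (rho_d + 8/3 * k ^ 2 * rho_0 * iT) >= rho_d + 8/3 * rho_0 * iT).
  { assert (k^3 * rho_0 * iT >= rho_0 * iT).
    { assert (0 < rho_0 * iT) by nra. nra. }
    nra. }
  assert (m * (rho_r + 2 * k * rho_0 + 4 * k ^ 2 * rho_0 * iT) >=
          3 * (rho_r + 2 * rho_0 + 4 * rho_0 * iT)).
  { assert (0 < rho_0 * iT) by nra.
    assert (k^2 * (rho_0 * iT) >= rho_0 * iT) by nra.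
    assert (k * rho_0 >= rho_0) by nra.
    assert (rho_r + 2 * k * rho_0 + 4 * k ^ 2 * rho_0 * iT >= rho_r + 2 * rho_0 + 4 * rho_0 * iT) by nra.
    assert (rho_r + 2 * rho_0 + 4 * rho_0 * iT > 0) by nra.
    nra. }
  assert (0 < rho_0 * iT) by nra.
  lra.
Qed.
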